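(* For any $k\in\mathbb{N}$, there exist simple connected graphs $G$ and $G'$ (each with at least one edge) such that $\mathrm{diam}(G)-\omega'(G)=k$ and $\omega'(G')-\mathrm{diam}(G')=k$.
   Context: For distinct $u_1,u_2\in V(G)$, an edge $e$ separates $u_1,u_2$ if $e$ lies on every shortest $(u_1,u_2)$-path in $G$. The auxiliary graph $H(G)$ has vertex set $E(G)$, and distinct edges $e_1,e_2$ are adjacent in $H(G)$ iff some pair of distinct vertices of $G$ is separated by both $e_1$ and $e_2$. $\omega'(G)$ denotes the clique number of $H(G)$, and $\mathrm{diam}(G)$ is the diameter of $G$. *)

(* Defs.v *)
From mathcomp Require Import all_boot.
Set Implicit Arguments. Unset Strict Implicit. Unset Printing Implicit Defensive.

Section Graphs.
Variables (T : finType) (e : rel T).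

Definition simple_graph := symmetric e /\ irreflexive e.
Definition connected_graph := forall u v : T, connect e u v.
Definition has_edge := exists u v : T, e u v.

Definition is_edge (A : {set T}) : bool :=
  [exists x, exists y, e x y && (A == [set x; y])].

(* a walk from u is a sequence p with path e u p; it ends at last u p and has length size p *)
Definition walk (u v : T) (p : seq T) := path e u p /\ last u p = v.

Definition shortest_path (u v : T) (p : seq T) :=
  walk u v p /\ forall q, walk u v q -> size p <= size q.

Definition edges_of (u : T) (p : seq T) : seq {set T} :=
  pairmap (fun x y => [set x; y]) u p.

Definition separates (A : {set T}) (u1 u2 : T) :=
  u1 != u2 /\ forall p, shortest_path u1 u2 p -> A \in edges_of u1 p.

Definition H_adj (A B : {set T}) :=
  A != B /\ exists u1 u2 : T, separates A u1 u2 /\ separates B u1 u2.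

Definition H_clique (S : {set {set T}}) :=
  (forall A, A \in S -> is_edge A) /\
  (forall A B, A \in S -> B \in S -> A != B -> H_adj A B).

Definition omega'_is (w : nat) :=
  (exists S, H_clique S /\ #|S| = w) /\ (forall S, H_clique S -> #|S| <= w).

Definition dist_is (u v : T) (n : nat) :=
  (exists p, walk u v p /\ size p = n) /\ (forall q, walk u v q -> n <= size q).

Definition diam_is (d : nat) :=
  (forall u v, exists n, dist_is u v n /\ n <= d) /\ (exists u v, dist_is u v d).

End Graphs.

(* Main.v *)
Require Import Defs.
From mathcomp Require Import all_boot zify.
Set Implicit Arguments. Unset Strict Implicit. Unset Printing Implicit Defensive.

Section Gen.
Variables (T : finType) (e : rel T).

Lemma walk0 u v : walk e u v [::] -> u = v.
Proof. by case. Qed.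

Lemma walk1 u v x : walk e u v [:: x] -> x = v /\ e u x.
Proof. case=> /= /andP[H _] E; by split. Qed.

Lemma walk_cons u v x p : walk e u v (x :: p) <-> e u x /\ walk e x v p.
Proof. rewrite /walk /=; split; [case=> /andP[-> ->] -> //| by case=> -> [-> ->]]. Qed.

Lemma edges_of_mem A u p : A \in edges_of u p ->
  exists x y : T, [/\ x \in u :: p, y \in u :: p & A = [set x; y]].
Proof.
elim: p u => [//|x p IH] u /=; rewrite inE => /orP[/eqP->|].
  by exists u, x; rewrite !inE !eqxx orbT.
move=> /IH [a [b [Ha Hb ->]]]; exists a, b; split=> //.
  by rewrite inE Ha orbT. by rewrite inE Hb orbT.
Qed.

Variable D : T -> T -> nat.
Hypothesis Dlow : forall u v p, walk e u v p -> D u v <= size p.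
Hypothesis Dex : forall u v, exists p, walk e u v p /\ size p = D u v.

Lemma D_dist u v : dist_is e u v (D u v).
Proof. split; [exact: Dex | exact: Dlow]. Qed.

Lemma D_shortest u v p : shortest_path e u v p -> size p = D u v.
Proof.
case=> W M; apply/eqP; rewrite eqn_leq Dlow // andbT.
by have [q [Wq <-]] := Dex u v; exact: M.
Qed.

Lemma D_shortest_ex u v p : walk e u v p -> size p = D u v -> shortest_path e u v p.
Proof. by move=> W S; split=> // q Wq; rewrite S Dlow. Qed.

Lemma D_conn : connected_graph e.
Proof.
move=> u v; have [p [[P L] _]] := Dex u v; apply/connectP; by exists p.
Qed.

Lemma D_diam d : (forall u v, D u v <= d) -> (exists u v, D u v = d) -> diam_is e d.
Proof.
move=> H [u [v E]]; split.
  by move=> x y; exists (D x y); split; [exact: D_dist|].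
by exists u, v; rewrite -E; exact: D_dist.
Qed.
End Gen.

Section Star.
Variable m : nat.
Local Notation ST := (option 'I_m.+2).
Definition se : rel ST := fun x y => (x == None) != (y == None).
Definition SD (x y : ST) : nat :=
  if x == y then 0 else if (x == None) || (y == None) then 1 else 2.

Lemma se_simple : simple_graph se.
Proof. split; [by move=> x y; rewrite /se eq_sym | by move=> x; rewrite /se eqxx]. Qed.

Lemma SDlow u v p : walk se u v p -> SD u v <= size p.
Proof.
rewrite /SD; case: p => [|x [|y p]] W.
- by rewrite (walk0 W) eqxx.
- have [Ex E] := walk1 W; subst x; move: E {W}; rewrite /se.
  by case: u => [a|]; case: v => [b|] //=; case: eqP.
- case: eqP => //; by case: ifP.
Qed.

Lemma SDex u v : exists p, walk se u v p /\ size p = SD u v.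
Proof.
rewrite /SD; case: (eqVneq u v) => [->|nuv]; first by exists [::].
case: u v nuv => [a|] [b|] //= nab.
- exists [:: None; Some b]; split=> //; split=> //.
- exists [:: None]; split=> //; split=> //.
- exists [:: Some b]; split=> //; split=> //.
Qed.

Definition sedge (i : 'I_m.+2) : {set ST} := [set None; Some i].

Lemma is_edge_star A : is_edge se A -> exists i, A = sedge i.
Proof.
case/existsP=> x /existsP[y /andP[E /eqP->]]; move: E; rewrite /se /sedge.
case: x => [a|]; case: y => [b|] //= _; first by exists a; rewrite setUC.
by exists b.
Qed.

Lemma sedge_inj : injective sedge.
Proof.
move=> i j E; have : Some i \in sedge j by rewrite -E !inE eqxx orbT.
by rewrite !inE /= => /eqP [].
Qed.

Lemma star_omega : omega'_is se m.+2.
Proof.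
split.
  exists [set sedge i | i in 'I_m.+2]; split; last by rewrite card_imset ?card_ord //; exact: sedge_inj.
  split.
    move=> A /imsetP [i _ ->]; apply/existsP; exists None; apply/existsP; exists (Some i).
    by rewrite /se /sedge !eqxx.
  move=> A B /imsetP [i _ ->] /imsetP [j _ ->] nij; split=> //.
  have ij : i != j by apply: contraNneq nij => ->.
  exists (Some i), (Some j).
  have key : forall p, shortest_path se (Some i) (Some j) p -> p = [:: None; Some j].
    move=> p Sp; have := D_shortest SDlow SDex Sp; rewrite /SD /= (inj_eq (@Some_inj _)) (negbTE ij) /=.
    case: Sp => W _; case: p W => [|x [|y [|]]] // W _.
    move: W; rewrite /walk /= /se; case: x => [a|] //=; [by case | by case=> _ ->].
  split; split; try by rewrite (inj_eq (@Some_inj _)).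
    by move=> p /key ->; rewrite /edges_of /= /sedge inE setUC eqxx.
  by move=> p /key ->; rewrite /edges_of /= /sedge !inE eqxx orbT.
move=> S [HS _]; apply: (@leq_trans #|[set sedge i | i in 'I_m.+2]|).
  apply: subset_leq_card; apply/subsetP=> A /HS /is_edge_star [i ->].
  by apply: imset_f.
by rewrite (leq_trans (leq_imset_card _ _)) // card_ord.
Qed.

Lemma star_all : exists d w, simple_graph se /\ connected_graph se /\ has_edge se /\
  diam_is se d /\ omega'_is se w /\ d = 2 /\ w = m.+2.
Proof.
exists 2, m.+2; split; first exact: se_simple.
split; first exact: (D_conn SDex).
split; first by exists None, (Some ord0).
split; last by split; first exact: star_omega.
apply: (D_diam SDlow SDex).
  by move=> u v; rewrite /SD; case: ifP => //; case: ifP.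
exists (Some ord0), (Some (lift ord0 ord0)); by rewrite /SD.
Qed.
End Star.

Section Blow.
Variable n : nat.
Hypothesis n1 : 0 < n.
Local Notation BT := ('I_n.+1 * bool)%type.
Definition lv (x : BT) : nat := x.1.
Definition be : rel BT := fun x y => ((lv x).+1 == lv y) || ((lv y).+1 == lv x).
Definition ld (i j : nat) := (i - j) + (j - i).
Definition BD (u v : BT) : nat :=
  if lv u == lv v then (if u == v then 0 else 2) else ld (lv u) (lv v).

Lemma lv_lt x : lv x < n.+1. Proof. exact: ltn_ord. Qed.

Lemma beE x y : be x y = (ld (lv x) (lv y) == 1).
Proof. rewrite /be /ld; apply/idP/idP; lia. Qed.

Lemma be_simple : simple_graph be.
Proof. split; [by move=> x y; rewrite /be orbC | by move=> x; rewrite /be; lia]. Qed.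

Lemma ld_low u v p : walk be u v p -> ld (lv u) (lv v) <= size p.
Proof.
elim: p u => [|x p IH] u.
  by move/walk0 => ->; rewrite /ld; lia.
move/walk_cons=> [E W]; have := IH _ W; move: E; rewrite beE /= /ld; lia.
Qed.

Lemma BDlow u v p : walk be u v p -> BD u v <= size p.
Proof.
move=> W; rewrite /BD; case: eqP => Hl; last exact: ld_low.
case: eqP => // nuv; case: p W => [|x [|y p]] W //.
  by move: nuv; rewrite (walk0 W).
have [Ex E] := walk1 W; subst x; move: E; rewrite beE Hl /ld; lia.
Qed.

Variable c : nat -> bool.
Definition mk (t : nat) : BT := (inord t, c t).
Lemma lv_mk t : t <= n -> lv (mk t) = t.
Proof. by move=> H; rewrite /lv /= inordK. Qed.

Lemma mono_path m : forall x v, lv x != lv v -> ld (lv x) (lv v) = m.+1 ->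
  exists p, walk be x v p /\ size p = m.+1 /\
    (forall y, y \in p -> y = v \/ y.2 = c (lv y)).
Proof.
elim: m => [|m IH] x v nl hd.
  exists [:: v]; split; last split=> //.
    by split=> //=; rewrite andbT beE hd.
  by move=> y; rewrite inE => /eqP ->; left.
have hx := lv_lt x; have hv := lv_lt v.
pose t := if lv x < lv v then (lv x).+1 else (lv x).-1.
have tn : t <= n by rewrite /t; case: ifP; lia.
have lt := lv_mk tn.
have [p [W [S H]]] : exists p, walk be (mk t) v p /\ size p = m.+1 /\
    (forall y, y \in p -> y = v \/ y.2 = c (lv y)).
  apply: IH; rewrite lt /t; move: hd nl; rewrite /ld; case: ifP; lia.
exists (mk t :: p); split; [|split].
- apply/walk_cons; split=> //; rewrite beE lt /t; move: hd nl; rewrite /ld; case: ifP; lia.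
- by rewrite /= S.
- move=> y; rewrite inE => /orP[/eqP ->|]; last exact: H.
  by right; rewrite lt.
Qed.

Lemma path_c u v : u != v ->
  exists p, walk be u v p /\ size p = BD u v /\
    (forall y, y \in p -> y = v \/ y.2 = c (lv y)).
Proof.
move=> nuv; rewrite /BD (negbTE nuv); case: eqP => Hl.
  have hu := lv_lt u.
  pose t := if lv u < n then (lv u).+1 else (lv u).-1.
  have tn : t <= n by rewrite /t; case: ifP; lia.
  have lt := lv_mk tn.
  exists [:: mk t; v]; split; last split=> //.
    apply/walk_cons; split; first by rewrite beE lt /t /ld; case: ifP; lia.
    by split=> //=; rewrite andbT beE lt -Hl /t /ld; case: ifP; lia.
  move=> y; rewrite !inE => /orP[/eqP ->|/eqP ->]; last by left.
  by right; rewrite lt.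
have : ld (lv u) (lv v) = (ld (lv u) (lv v)).-1.+1 by move: Hl; rewrite /ld; lia.
move=> E; rewrite E; apply: mono_path; first by apply/eqP.
by rewrite -E.
Qed.
End Blow.

Section Blow2.
Variable n : nat.
Hypothesis n2 : 1 < n.
Local Notation BT := ('I_n.+1 * bool)%type.
Let n1 : 0 < n. Proof. exact: ltnW. Qed.

Lemma BDex (u v : BT) : exists p, walk (@be n) u v p /\ size p = BD u v.
Proof.
case: (eqVneq u v) => [->|nuv].
  by exists [::]; rewrite /BD !eqxx.
have [p [W [S _]]] := path_c n1 (fun _ => false) nuv; by exists p.
Qed.

Lemma ab_false (b : bool) : b = ~~ b -> False. Proof. by case: b. Qed.

Lemma sep_adj A (u1 u2 : BT) : is_edge (@be n) A -> separates (@be n) A u1 u2 -> @be n u1 u2.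
Proof.
case/existsP=> a1 /existsP[a2 /andP[Ea /eqP EA]] [nuv Hs]; subst A.
apply/negPn/negP => nadj.
pose c l := if lv a1 == l then ~~ a1.2 else ~~ a2.2.
have [p [W [S H]]] := path_c n1 c nuv.
have sp := D_shortest_ex (@BDlow n n1) W S.
have /edges_of_mem [x [y [Hx Hy Exy]]] := Hs p sp.
have la : lv a1 != lv a2 by move: Ea; rewrite beE /ld; lia.
have notin : forall z, z \in u1 :: p -> z \in [set a1; a2] -> z = u1 \/ z = u2.
  move=> z; rewrite inE => /orP[/eqP->|zp]; first by left.
  case: (H z zp) => [->|Hz]; first by right.
  rewrite !inE => /orP[/eqP Ez|/eqP Ez]; exfalso; subst z; move: Hz; rewrite /c.
    by rewrite eqxx; exact: ab_false.
  by rewrite (negbTE la); exact: ab_false.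
have inp : forall z, z \in [set a1; a2] -> z \in u1 :: p.
  by move=> z; rewrite Exy !inE => /orP[/eqP->|/eqP->].
have [h1|h1] := notin a1 (inp _ (set21 _ _)) (set21 _ _);
have [h2|h2] := notin a2 (inp _ (set22 _ _)) (set22 _ _); subst.
- by rewrite eqxx in la.
- by rewrite Ea in nadj.
- by move: nadj; rewrite /be orbC -/(be u2 u1) Ea.
- by rewrite eqxx in la.
Qed.

Lemma blow_omega : omega'_is (@be n) 1.
Proof.
pose a : BT := (ord0, false).
pose b : BT := (inord 1, false).
have ab : @be n a b.
  rewrite beE /a /b /lv /= ?(@inordK n 1) /ld /=; lia.
split.
  exists [set [set a; b]]; split; last exact: cards1.
  split.
    move=> A; rewrite inE => /eqP ->; apply/existsP; exists a; apply/existsP; exists b.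
    by rewrite ab eqxx.
  by move=> A B; rewrite !inE => /eqP -> /eqP ->; rewrite eqxx.
move=> S [HE HA]; apply/card_le1_eqP => A B iA iB.
case: (eqVneq A B) => // nAB; exfalso.
have [_ [u1 [u2 [s1 s2]]]] := HA A B iA iB nAB.
have e12 := sep_adj (HE _ iA) s1.
have W : walk (@be n) u1 u2 [:: u2] by split=> //=; rewrite e12.
have sz : size [:: u2] = BD u1 u2.
  move: e12; rewrite beE // /BD /ld; case: (lv u1 =P lv u2) => [->|_] /=; lia.
have sp := D_shortest_ex (@BDlow n n1) W sz.
have := s1.2 _ sp; have := s2.2 _ sp; rewrite /edges_of /= !inE => /eqP EB /eqP EA.
by rewrite EA EB eqxx in nAB.
Qed.

Lemma blow_all : exists d w, simple_graph (@be n) /\ connected_graph (@be n) /\ has_edge (@be n) /\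
  diam_is (@be n) d /\ omega'_is (@be n) w /\ d = n /\ w = 1.
Proof.
exists n, 1; split; first exact: be_simple.
split; first exact: (D_conn BDex).
split.
  exists (ord0, false), (inord 1, false); by rewrite beE // /lv /= ?(@inordK n 1) /ld /=; lia.
split; last by split; first exact: blow_omega.
apply: (D_diam (@BDlow n n1) BDex).
  move=> u v; have := lv_lt u; have := lv_lt v; rewrite /BD /ld.
  case: eqP => _; last lia. case: eqP => _; lia.
exists (ord0, false), (ord_max, false); rewrite /BD /lv /=.
case: eqP => [E|_]; first by move: n2; rewrite -E.
rewrite /ld; lia.
Qed.
End Blow2.

Theorem proposition2 (k : nat) :
  (exists (T : finType) (e : rel T) (d w : nat),
     simple_graph e /\ connected_graph e /\ has_edge e /\
     diam_is e d /\ omega'_is e w /\ d = w + k) /\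
  (exists (T : finType) (e : rel T) (d w : nat),
     simple_graph e /\ connected_graph e /\ has_edge e /\
     diam_is e d /\ omega'_is e w /\ w = d + k).
Proof.
split.
  case: k => [|k].
    have [d [w [s [c [h [di [om [Ed Ew]]]]]]]] := star_all 0.
    exists _, (@se 0), d, w; do 5 (split=> //); by rewrite Ed Ew.
  have n2 : 1 < k.+2 by [].
  have [d [w [s [c [h [di [om [Ed Ew]]]]]]]] := blow_all n2.
  exists _, (@be k.+2), d, w; do 5 (split=> //); by rewrite Ed Ew add1n.
have [d [w [s [c [h [di [om [Ed Ew]]]]]]]] := star_all k.
exists _, (@se k), d, w; do 5 (split=> //); by rewrite Ed Ew.
Qed.
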